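(* Let $k$ be a field of characteristic different from $2$ containing a square root of $-1$, and let $q$ be a quadratic form of dimension $n$ over $k$. (i) If $q\in I(k)$, then $\mathrm{Pf}_1(q)\leq n$; if moreover $q$ represents $1$, then $\mathrm{Pf}_1(q)\leq n-1$. (ii) If $q\in I^2(k)$, then $\mathrm{Pf}_2(q)\leq n-2$; if moreover $q$ represents $1$, then $\mathrm{Pf}_2(q)\leq n-3$.
   Context: $W(k)$ is the Witt ring, $I(k)$ its fundamental ideal (classes of even-dimensional forms), $I^m(k)$ its $m$-th power; a form is in $I^m(k)$ if its Witt class is. An $m$-fold Pfister form is $\langle\langle a_1,\ldots,a_m\rangle\rangle=\langle 1,a_1\rangle\otimes\cdots\otimes\langle 1,a_m\rangle$, $a_i\in k^\times$. For $q\in I^m(k)$, $\mathrm{Pf}_m(q)$ is the least number of terms in an expression of the Witt class of $q$ as a sum of $m$-fold Pfister forms in $W(k)$. *)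

(* Defs.v *)
(* Quadratic forms over a field k (char <> 2) are given by
   their symmetric Gram matrix: q(x) = x *m A *m x^T. *)
From HB Require Import structures.
From mathcomp Require Import all_boot all_order all_algebra.
From mathcomp Require mxtens.
Set Implicit Arguments. Unset Strict Implicit. Unset Printing Implicit Defensive.
Import GRing.Theory.
Local Open Scope ring_scope.

Record qform (k : fieldType) := QForm { qdim : nat; gram : 'M[k]_qdim }.
Arguments QForm {k qdim}.

Section QF.
Variable k : fieldType.
Implicit Types (p q : qform k).

Definition qsymmetric p : Prop := (gram p)^T = gram p.
Definition qnondeg p : Prop := gram p \in unitmx.
Definition is_qf p : Prop := qsymmetric p /\ qnondeg p.

Definition qval p (x : 'rV[k]_(qdim p)) : k := (x *m gram p *m x^T) 0 0.
Definition represents p (c : k) : Prop :=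
  exists x : 'rV[k]_(qdim p), qval x = c.

Definition isometric p q : Prop :=
  qdim p = qdim q /\
  exists P : 'M[k]_(qdim q, qdim p),
    \rank P = qdim q /\ P *m gram p *m P^T = gram q.

Definition qsum p q : qform k := QForm (block_mx (gram p) 0 0 (gram q)).
Definition qtens p q : qform k := QForm (mxtens.tensmx (gram p) (gram q)).
Definition qdiag (s : seq k) : qform k :=
  QForm (diag_mx (\row_(i < size s) s`_i)).
Definition qzero : qform k := qdiag [::].
Definition qone : qform k := qdiag [:: 1].
Definition qbigsum (l : seq (qform k)) : qform k := foldr qsum qzero l.
Definition qbigtens (l : seq (qform k)) : qform k := foldr qtens qone l.

Definition hyp (r : nat) : qform k := qdiag (flatten (nseq r [:: 1; -1])).

Definition witt_equiv p q : Prop :=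
  exists r s : nat, isometric (qsum p (hyp r)) (qsum q (hyp s)).

(* q \in I^m(k): the Witt class of q is a sum of products of m elements of
   I(k) (classes of even-dimensional forms); this is the additive description
   of the m-th power of the ideal I(k). *)
Definition in_Ipow (m : nat) q : Prop :=
  exists (r : nat) (F : 'I_r -> 'I_m -> qform k),
    (forall i j, is_qf (F i j) /\ ~~ odd (qdim (F i j))) /\
    witt_equiv q
      (qbigsum [seq qbigtens [seq F i j | j <- enum 'I_m] | i <- enum 'I_r]).

Definition pfister (a : seq k) : qform k :=
  qbigtens [seq qdiag [:: 1; x] | x <- a].

(* Pf_m(q) <= r : the Witt class of q is a sum of at most r m-fold Pfister
   forms (with entries in k^x). *)
Definition Pf_le (m : nat) q (r : nat) : Prop :=
  exists s : seq (seq k),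
    (size s <= r)%N /\
    all (fun a => (size a == m) && all (fun x => x != 0) a) s /\
    witt_equiv q (qbigsum (map pfister s)).

End QF.

(* Main.v *)
Require Import Defs.
From HB Require Import structures.
From mathcomp Require Import all_boot all_order all_algebra.
From mathcomp Require Import mxtens perm ring zify.
Set Implicit Arguments. Unset Strict Implicit. Unset Printing Implicit Defensive.
Import GRing.Theory.
Local Open Scope ring_scope.

Ltac permt := apply/seq.permP => ?; do 6! rewrite ?count_cat /=; lia.

Section Iso.
Variable k : fieldType.
Implicit Types p q r : qform k.

Lemma iso_unit n (A B : 'M[k]_n) (P : 'M_n) :
  P \in unitmx -> P *m A *m P^T = B -> isometric (QForm A) (QForm B).
Proof. by move=> uP eB; split=> //; exists P; rewrite mxrank_unit. Qed.

Lemma iso_refl p : isometric p p.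
Proof. case: p => n A; apply: (iso_unit (P:=1%:M)); first exact: unitmx1.
by rewrite trmx1 mulmx1 mul1mx. Qed.

Lemma iso_sym p q : isometric p q -> isometric q p.
Proof.
case: p => m A; case: q => n B [/= e]; subst n => -[P [rP eB]].
have uP : P \in unitmx by rewrite -row_free_unit /row_free rP.
apply: (iso_unit (P:=invmx P)); first by rewrite unitmx_inv.
rewrite -eB !mulmxA mulVmx // mul1mx -mulmxA -trmx_mul mulVmx // trmx1 mulmx1.
done.
Qed.

Lemma iso_trans p q r : isometric p q -> isometric q r -> isometric p r.
Proof.
case: p => m A; case: q => n B; case: r => l C [/= e]; subst n => -[P [rP eB]].
case=> /= e; subst l => -[Q [rQ eC]].
have uP : P \in unitmx by rewrite -row_free_unit /row_free rP.
have uQ : Q \in unitmx by rewrite -row_free_unit /row_free rQ.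
apply: (iso_unit (P:=Q *m P)); first by rewrite unitmx_mul uP uQ.
by rewrite -eC -eB trmx_mul !mulmxA.
Qed.

Lemma iso_eqdim m n (A : 'M[k]_m) (B : 'M[k]_n) (e : m = n) :
  (forall i j, A i j = B (cast_ord e i) (cast_ord e j)) ->
  isometric (QForm A) (QForm B).
Proof.
subst n => eAB; apply: (iso_unit (P:=1%:M)); first exact: unitmx1.
by rewrite trmx1 mulmx1 mul1mx; apply/matrixP=> i j; rewrite eAB !cast_ord_id.
Qed.

Lemma iso_sum p p' q q' : isometric p p' -> isometric q q' ->
  isometric (qsum p q) (qsum p' q').
Proof.
case: p => m A; case: p' => m' A' [/= e]; subst m' => -[P [rP eA]].
case: q => n B; case: q' => n' B' [/= e]; subst n' => -[Q [rQ eB]].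
have uP : P \in unitmx by rewrite -row_free_unit /row_free rP.
have uQ : Q \in unitmx by rewrite -row_free_unit /row_free rQ.
rewrite /qsum /=.
apply: (iso_unit (P:=block_mx P 0 0 Q)).
  by rewrite unitmxE det_ublock unitrM -!unitmxE uP uQ.
rewrite tr_block_mx !mulmx_block !trmx0 !mulmx0 !mul0mx !addr0 !add0r.
by rewrite eA eB !mul0mx.
Qed.

Lemma iso_tens p p' q q' : isometric p p' -> isometric q q' ->
  isometric (qtens p q) (qtens p' q').
Proof.
case: p => m A; case: p' => m' A' [/= e]; subst m' => -[P [rP eA]].
case: q => n B; case: q' => n' B' [/= e]; subst n' => -[Q [rQ eB]].
have uP : P \in unitmx by rewrite -row_free_unit /row_free rP.
have uQ : Q \in unitmx by rewrite -row_free_unit /row_free rQ.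
rewrite /qtens /=.
case: m A A' P rP eA uP => [|m] A A' P rP eA uP.
  apply: iso_eqdim => //= -[] //.
case: n B B' Q rQ eB uQ => [|n] B B' Q rQ eB uQ.
  by apply: iso_eqdim => // i; exfalso; case: i => /= i; rewrite muln0.
apply: (iso_unit (P:=tensmx P Q)); first exact: tensmx_unit.
by rewrite trmx_tens !tensmx_mul eA eB.
Qed.

End Iso.


Section Diag.
Variable k : fieldType.
Implicit Types s t : seq k.

Lemma qsum_diag s t : isometric (qsum (qdiag s) (qdiag t)) (qdiag (s ++ t)).
Proof.
rewrite /qsum /qdiag /=.
apply: (@iso_eqdim _ _ _ _ _ (esym (size_cat s t))) => i j.
rewrite [RHS]mxE [in RHS]mxE -val_eqE /=.
case: (split_ordP i) => i' ->; case: (split_ordP j) => j' ->;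
rewrite ?block_mxEul ?block_mxEur ?block_mxEdl ?block_mxEdr ?mxE /= ?nth_cat /=.
- by rewrite ltn_ord.
- by rewrite (@ltn_eqF i') ?mulr0n // ltn_addr.
- by rewrite eq_sym (@ltn_eqF j') ?mulr0n // ltn_addr.
- by rewrite ltnNge leq_addr /= addKn eqn_add2l.
Qed.
End Diag.

Section Diag2.
Variable k : fieldType.
Implicit Types s t : seq k.

Lemma diag_permf n (d : 'rV[k]_n) (sg : 'S_n) :
  isometric (QForm (diag_mx d)) (QForm (diag_mx (\row_i d 0 (sg i)))).
Proof.
apply: (iso_unit (P := perm_mx sg)); first exact: unitmx_perm.
rewrite tr_perm_mx -row_permE -col_permE; apply/matrixP=> i j.
by rewrite !mxE (inj_eq perm_inj).
Qed.

Lemma diag_perm s t : perm_eq s t -> isometric (qdiag t) (qdiag s).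
Proof.
move/(@perm.tuple_permP _ _ s (in_tuple t)) => [p es].
have es' : forall i : 'I_(size t), s`_i = t`_(p i).
  by move=> i; rewrite es -tnth_nth tnth_mktuple (tnth_nth 0).
have e : size t = size s by rewrite es size_tuple.
apply: iso_trans (diag_permf _ p) _.
apply: (@iso_eqdim _ _ _ _ _ e) => i j.
rewrite !mxE /= es' -val_eqE /=.
by rewrite (inj_eq val_inj).
Qed.
End Diag2.

Lemma nth_allpairs (T : Type) (x0 : T) (f : T -> T -> T) (s t : seq T) i j :
  (i < size s)%N -> (j < size t)%N ->
  nth x0 [seq f x y | x <- s, y <- t] (i * size t + j) = f (nth x0 s i) (nth x0 t j).
Proof.
elim: s i => [|x s IH] [|i] //= Hi Hj.
  by rewrite mul0n add0n nth_cat size_map Hj (nth_map x0).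
rewrite nth_cat size_map mulSn -addnA ltnNge leq_addr /= addKn IH //.
Qed.

Section Diag3.
Variable k : fieldType.
Implicit Types s t : seq k.

Lemma qtens_diag s t :
  isometric (qtens (qdiag s) (qdiag t)) (qdiag [seq x * y | x <- s, y <- t]).
Proof.
rewrite /qtens /qdiag /=.
have e : (size s * size t)%N = size [seq x * y | x <- s, y <- t] by rewrite size_allpairs.
apply: (@iso_eqdim _ _ _ _ _ e) => I J.
case: (mxtens_indexP I) => i1 i2; case: (mxtens_indexP J) => j1 j2.
rewrite tensmxE !mxE /= nth_allpairs // (inj_eq (@cast_ord_inj _ _ e)) (inj_eq (can_inj (@mxtens_indexK _ _))) xpair_eqE.
by case: (i1 == j1); case: (i2 == j2); rewrite /= ?mulr0n ?mulr0 ?mul0r ?mulr1n.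
Qed.

Lemma det_qdiag s : \det (gram (qdiag s)) = \prod_(x <- s) x.
Proof. by rewrite /= det_diag (big_nth 0) big_mkord; apply: eq_bigr => i _; rewrite mxE. Qed.

Lemma det_iso p q : isometric p q -> exists c : k, c != 0 /\ \det (gram q) = c ^+ 2 * \det (gram p).
Proof.
case: p => m A; case: q => n B [/= e]; subst n => -[P [rP eB]].
have uP : P \in unitmx by rewrite -row_free_unit /row_free rP.
exists (\det P); split; first by rewrite -unitfE -unitmxE.
by rewrite -eB !det_mulmx det_tr mulrAC expr2.
Qed.
End Diag3.


Section Pair.
Variable k : fieldType.

Lemma iso_of_eq n (A B P : 'M[k]_n) :
  B \in unitmx -> P *m A *m P^T = B -> isometric (QForm A) (QForm B).
Proof.
move=> uB eB; apply: (iso_unit (P := P)) => //.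
move: uB; rewrite -eB !unitmxE !det_mulmx !unitrM; by case/andP => /andP [].
Qed.

Lemma diag_sq (x c : k) : c != 0 -> isometric (qdiag [:: x]) (qdiag [:: c ^+ 2 * x]).
Proof.
move=> c0; apply: (iso_unit (P := c%:M)).
  by rewrite unitmxE det_scalar unitfE expf_neq0.
rewrite tr_scalar_mx.
apply/matrixP => a b; rewrite !mxE !big_ord1 !mxE !big_ord1 !mxE !ord1 /= !mulr1n; ring.
Qed.

Variable ii : k.
Hypothesis hii : ii ^+ 2 = -1.
Hypothesis h2 : (2%:R : k) != 0.

Lemma diag_pair (x : k) : x != 0 -> isometric (qdiag [:: x; x]) (qdiag [:: 1; -1]).
Proof.
move=> x0.
pose al := (1 + x^-1) / 2%:R; pose be := (1 - x^-1) / 2%:R.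
pose P : 'M[k]_2 := \matrix_(a < 2, b < 2)
  if (a : nat) == 0%N then (if (b : nat) == 0%N then al else ii * be)
  else (if (b : nat) == 0%N then be else ii * al).
have h : forall u v, (ii * u) * (ii * v) = - (u * v).
  by move=> u v; rewrite mulrACA -expr2 hii mulN1r.
apply: (@iso_of_eq _ _ _ P).
  rewrite unitmxE; have /= -> := det_qdiag [:: (1:k); -1].
  by rewrite unitfE !big_cons big_nil mulr1 mul1r oppr_eq0 oner_eq0.
have -> : diag_mx (\row_(i < 2) [:: x; x]`_i) = x%:M.
  by apply/matrixP => a b; rewrite !mxE; case: a => [[|[|a]]] //= _.
rewrite mul_mx_scalar -scalemxAl.
apply/matrixP => a b; rewrite !mxE !big_ord_recl big_ord0 !mxE /=.
case: a => [[|[|a]]] //= Ha; case: b => [[|[|b]]] //= Hb; rewrite ?h /al /be /=; field; by rewrite h2 x0.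
Qed.
End Pair.


Section Diagonalize.
Variable k : fieldType.

Definition qv n (A : 'M[k]_n) (x : 'rV_n) := (x *m A *m x^T) 0 0.

Definition DiagP n (A : 'M[k]_n) :=
  exists s, all (fun y => y != 0) s /\ isometric (QForm A) (qdiag s).

Lemma diag_head0 n (IH : forall D : 'M[k]_n, D^T = D -> D \in unitmx -> DiagP D)
  (A : 'M[k]_(1 + n)) (x : 'rV_(1 + n)) : A^T = A -> A \in unitmx ->
  x 0 0 != 0 -> qv A x != 0 ->
  exists s, all (fun y => y != 0) s /\ isometric (QForm A) (qdiag (qv A x :: s)).
Proof.
move=> sA uA x0 cx.
set c := qv A x.
pose P : 'M[k]_(1 + n) := block_mx (lsubmx x) (rsubmx x) 0 1%:M.
have uP : P \in unitmx.
  rewrite unitmxE det_ublock det1 mulr1 det_mx11 unitfE mxE.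
  by have -> : lshift n (0 : 'I_1) = 0 by apply: val_inj.
pose B := P *m A *m P^T.
have sB : B^T = B by rewrite /B !trmx_mul trmxK sA mulmxA.
have uB : B \in unitmx by rewrite !unitmx_mul uP uA unitmx_tr uP.
have eC : ulsubmx B = c%:M.
  rewrite [LHS]mx11_scalar; congr (_%:M).
  have uPx : usubmx P = x by rewrite /P block_mxEv col_mxKu hsubmxK.
  rewrite /B /ulsubmx -mul_usub_mx -mul_usub_mx uPx -mulmx_lsub -trmx_usub uPx.
  by [].
set w := ursubmx B; set D := drsubmx B.
have eDL : dlsubmx B = w^T by rewrite /w trmx_ursub sB.
pose Q : 'M[k]_(1 + n) := block_mx 1%:M 0 (- c^-1 *: w^T) 1%:M.
pose D' := D - c^-1 *: (w^T *m w).
have c0 : c != 0 by [].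
have eB' : Q *m B *m Q^T = block_mx c%:M 0 0 D'.
  rewrite -[B in LHS]submxK eC eDL -/w -/D tr_block_mx !mulmx_block.
  rewrite ?mul1mx ?mul0mx ?mulmx0 ?mulmx1 ?addr0 ?add0r ?trmx0 ?trmx1 ?mul1mx ?mul0mx ?mulmx0 ?mulmx1 ?addr0 ?add0r.
  have e1 : - c^-1 *: w^T *m c%:M + w^T = 0.
    by rewrite mul_mx_scalar scalerA mulrN divff // scaleN1r addNr.
  have e2 : c%:M *m (- c^-1 *: w^T)^T + w = 0.
    by rewrite linearZ /= trmxK mul_scalar_mx scalerA mulrN divff // scaleN1r addNr.
  by rewrite e1 e2 mul0mx add0r /D' -scalemxAl scaleNr addrC.
have uQ : Q \in unitmx by rewrite unitmxE det_lblock !det1 mulr1 unitr1.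
have sD' : D'^T = D'.
  by rewrite /D' linearB /= linearZ /= trmx_mul trmxK /D trmx_drsub sB.
have uD' : D' \in unitmx.
  have : Q *m B *m Q^T \in unitmx.
    by rewrite !unitmx_mul !unitmx_tr uQ uP uA.
  by rewrite eB' !unitmxE det_ublock unitrM => /andP [].
have [s [s0 isD]] := IH D' sD' uD'.
exists s; split; first by [].
apply: iso_trans (iso_unit uP (erefl B)) _.
apply: iso_trans (iso_unit uQ eB') _.
apply: iso_trans (qsum_diag [:: c] s).
change (isometric (qsum (QForm (c%:M : 'M[k]_1)) (QForm D')) (qsum (qdiag [:: c]) (qdiag s))).
apply: iso_sum isD.
apply: (@iso_eqdim _ _ _ _ _ (erefl 1%N)) => i j.
by rewrite !ord1 !mxE.
Qed.

Lemma qv_delta n (A : 'M[k]_n) a b :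
  ((delta_mx (0 : 'I_1) a : 'rV_n) *m A *m (delta_mx (0 : 'I_1) b : 'rV_n)^T) 0 0 = A a b.
Proof. by rewrite -rowE trmx_delta -colE !mxE. Qed.

Lemma diag_head n (IH : forall D : 'M[k]_n, D^T = D -> D \in unitmx -> DiagP D)
  (A : 'M[k]_n.+1) (x : 'rV_n.+1) : A^T = A -> A \in unitmx -> qv A x != 0 ->
  exists s, all (fun y => y != 0) s /\ isometric (QForm A) (qdiag (qv A x :: s)).
Proof.
move=> sA uA cx.
have [j xj] : exists j, x 0 j != 0.
  case: (pickP (fun j => x 0 j != 0)) => [j xj|hx]; first by exists j.
  suff x0 : x = 0 by move: cx; rewrite x0 /qv !mul0mx mxE eqxx.
  by apply/matrixP => a b; rewrite !ord1 mxE; move/negbFE/eqP: (hx b).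
pose S : 'M[k]_n.+1 := perm_mx (tperm 0 j).
have uS : S \in unitmx by exact: unitmx_perm.
have STS : S^T *m S = 1%:M by rewrite tr_perm_mx -perm_mxM mulVg perm_mx1.
pose A' := S *m A *m S^T; pose x' := x *m S^T.
have sA' : A'^T = A' by rewrite /A' !trmx_mul trmxK sA mulmxA.
have uA' : A' \in unitmx by rewrite !unitmx_mul unitmx_tr uS uA.
have ev : qv A' x' = qv A x.
  rewrite /qv /A' /x' trmx_mul trmxK !mulmxA -[x *m S^T *m S]mulmxA STS mulmx1.
  by rewrite -[x *m A *m S^T *m S]mulmxA STS mulmx1.
have x'0 : x' 0 0 != 0.
  by rewrite /x' /S tr_perm_mx -col_permE mxE tpermL.
have cx' : qv A' x' != 0 by rewrite ev.
have [s [s0 iso]] := @diag_head0 n IH A' x' sA' uA' x'0 cx'.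
exists s; split => //; rewrite -ev.
exact: iso_trans (iso_unit uS (erefl A')) iso.
Qed.

Hypothesis h2 : (2%:R : k) != 0.

Lemma diag_ex n (A : 'M[k]_n) : A^T = A -> A \in unitmx -> DiagP A.
Proof.
elim: n A => [|n IH] A sA uA.
  exists [::]; split => //; apply: (@iso_eqdim _ _ _ _ _ (erefl 0%N)) => -[] //.
have [x cx] : exists x, qv A x != 0.
  case: (pickP (fun i => A i i != 0)) => [i Ai|hd].
    by exists (delta_mx 0 i); rewrite /qv qv_delta.
  case: (pickP (fun ij : 'I_n.+1 * 'I_n.+1 => A ij.1 ij.2 != 0)) => [[i j] /= Aij|hA].
    exists (delta_mx 0 i + delta_mx 0 j).
    have addE : forall (M N : 'M[k]_1), (M + N) 0 0 = M 0 0 + N 0 0 by move=> M N; rewrite mxE.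
    rewrite /qv linearD /= !mulmxDl !mulmxDr !addE !qv_delta.
    have -> : A j i = A i j by rewrite -[in LHS]sA mxE.
    move/negbFE/eqP: (hd i) => ->; move/negbFE/eqP: (hd j) => ->.
    by rewrite add0r addr0 -mulr2n -mulr_natl mulf_neq0.
  suff A0 : A = 0 by move: uA; rewrite A0 unitmxE det0 unitr0.
  by apply/matrixP => a b; rewrite mxE; move/negbFE/eqP: (hA (a, b)).
have [s [s0 iso]] := diag_head IH sA uA cx.
exists (qv A x :: s); split => //=; by rewrite cx s0.
Qed.
End Diagonalize.


Section Witt.
Variable k : fieldType.
Implicit Types a b c : seq k.

Definition hs (r : nat) : seq k := flatten (nseq r [:: 1; -1]).

Lemma hsD r u : hs (r + u) = hs r ++ hs u.
Proof. by rewrite /hs nseqD flatten_cat. Qed.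

Definition Wrel a b := exists r u, isometric (qdiag (a ++ hs r)) (qdiag (b ++ hs u)).

Lemma diso_cat a a' b b' : isometric (qdiag a) (qdiag a') -> isometric (qdiag b) (qdiag b') ->
  isometric (qdiag (a ++ b)) (qdiag (a' ++ b')).
Proof.
move=> ia ib; apply: iso_trans (iso_sym (qsum_diag a b)) _.
exact: iso_trans (iso_sum ia ib) (qsum_diag a' b').
Qed.

Lemma W_iso a b : isometric (qdiag a) (qdiag b) -> Wrel a b.
Proof. by move=> iab; exists 0%N, 0%N; rewrite !cats0. Qed.

Lemma W_refl a : Wrel a a.
Proof. exact/W_iso/iso_refl. Qed.

Lemma W_perm a b : perm_eq a b -> Wrel a b.
Proof. by move=> pab; apply/W_iso/diag_perm; rewrite perm_sym. Qed.

Lemma W_sym a b : Wrel a b -> Wrel b a.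
Proof. by case=> r [u i]; exists u, r; exact: iso_sym. Qed.


Lemma W_trans a b c : Wrel a b -> Wrel b c -> Wrel a c.
Proof.
case=> r [u i1] [v [w i2]]; exists (r + v)%N, (w + u)%N.
rewrite !hsD !catA.
have s1 := diso_cat i1 (iso_refl (qdiag (hs v))).
have s2 : isometric (qdiag ((b ++ hs u) ++ hs v)) (qdiag ((b ++ hs v) ++ hs u)).
  by apply: diag_perm; permt.
have s3 := diso_cat i2 (iso_refl (qdiag (hs u))).
exact: iso_trans s1 (iso_trans s2 s3).
Qed.

Lemma W_cat a a' b b' : Wrel a a' -> Wrel b b' -> Wrel (a ++ b) (a' ++ b').
Proof.
case=> r1 [u1 i1] [r2 [u2 i2]]; exists (r1 + r2)%N, (u1 + u2)%N.
rewrite !hsD.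
have s1 : isometric (qdiag ((a ++ b) ++ hs r1 ++ hs r2)) (qdiag ((a ++ hs r1) ++ (b ++ hs r2))).
  by apply: diag_perm; permt.
have s3 : isometric (qdiag ((a' ++ hs u1) ++ (b' ++ hs u2))) (qdiag ((a' ++ b') ++ hs u1 ++ hs u2)).
  by apply: diag_perm; permt.
exact: iso_trans s1 (iso_trans (diso_cat i1 i2) s3).
Qed.

Variable ii : k.
Hypothesis hii : ii ^+ 2 = -1.
Hypothesis h2 : (2%:R : k) != 0.

Lemma W_pair x : x != 0 -> Wrel [:: x; x] [::].
Proof. by move=> x0; exists 0%N, 1%N; rewrite cats0 /=; exact: (diag_pair hii h2 x0). Qed.

Lemma W_sq (x e : k) : e != 0 -> Wrel [:: x] [:: e ^+ 2 * x].
Proof. by move=> c0; apply/W_iso/diag_sq. Qed.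

End Witt.



Section Comb.
Variable k : fieldType.
Variable ii : k.
Hypothesis hii : ii ^+ 2 = -1.
Hypothesis h2 : (2%:R : k) != 0.
Implicit Types a b c : seq k.

Local Notation Wrel := (Wrel (k:=k)).

Lemma W_ones m a : Wrel (nseq (2 * m) 1 ++ a) a.
Proof.
elim: m => [|m IH]; first exact: W_refl.
have -> : (2 * m.+1 = 2 + 2 * m)%N by lia.
rewrite nseqD -catA.
have := W_cat (W_pair hii h2 (@oner_neq0 k)) IH; by [].
Qed.

Lemma W_close F m (be ga e : k) : be != 0 -> e != 0 -> be * ga = e ^+ 2 ->
  Wrel (F ++ nseq (2 * m) 1 ++ [:: be; ga]) F.
Proof.
move=> b0 e0 eb.
have hg : Wrel [:: ga] [:: be].
  have -> : be = (be / e) ^+ 2 * ga.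
    have g0 : ga != 0.
      by apply: contraNneq (expf_neq0 2 e0); rewrite -eb => ->; rewrite mulr0.
    rewrite expr_div_n -mulrA mulrCA -eb; field; by rewrite g0 b0.
  apply: W_sq; by rewrite mulf_neq0 ?invr_eq0.
have h1 : Wrel [:: be; ga] [::].
  apply: W_trans (W_pair hii h2 b0).
  exact: (W_cat (W_refl [:: be]) hg).
rewrite -[F in Wrel _ F]cats0.
apply: W_cat (W_refl F) _.
rewrite -[X in Wrel _ X]cats0.
apply: W_trans (W_cat (W_refl _) h1) _.
rewrite cats0 /=; have := W_ones m [::]; rewrite cats0; exact.
Qed.

Definition pdiag (a : seq k) : seq k :=
  foldr (fun x acc => [seq u * v | u <- [:: 1; x], v <- acc]) [:: 1] a.

Lemma pfister_diag a : isometric (pfister a) (qdiag (pdiag a)).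
Proof.
elim: a => [|x a IH]; first exact: iso_refl.
exact: iso_trans (iso_tens (iso_refl _) IH) (qtens_diag _ _).
Qed.

Lemma bigsum_diag (l : seq (seq k)) :
  isometric (qbigsum (map (@pfister k) l)) (qdiag (flatten (map pdiag l))).
Proof.
elim: l => [|x l IH]; first exact: iso_refl.
exact: iso_trans (iso_sum (pfister_diag x) IH) (qsum_diag _ _).
Qed.

Lemma pdiag1 (x : k) : pdiag [:: x] = [:: 1; x].
Proof. by rewrite /= !mulr1. Qed.

Lemma pdiag2 (b x : k) : pdiag [:: b; x] = [:: 1; x; b; b * x].
Proof. by rewrite /= !mulr1 !mul1r. Qed.

Fixpoint pfs (b : k) (l : seq k) : seq (seq k) :=
  if l is x :: l' then [:: b; x] :: pfs (b * x) l' else [::].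

Lemma claim l : forall b : k, b != 0 -> all (fun y => y != 0) l ->
  Wrel (b :: l) (flatten (map pdiag (pfs b l)) ++ nseq (size l) 1 ++ [:: b * \prod_(y <- l) y]).
Proof.
elim: l => [|x l IH] b b0 /=.
  by rewrite big_nil mulr1 => _; exact: W_refl.
case/andP => x0 l0.
have bx0 : b * x != 0 by rewrite mulf_neq0.
have base : Wrel [:: b; x] ([:: 1; x; b; b * x] ++ [:: 1; b * x]).
  apply: W_sym; apply: W_trans (W_perm (_ : perm_eq _ ([:: 1; 1] ++ [:: b * x; b * x] ++ [:: b; x]))) _.
    by permt.
  exact: (W_cat (W_pair hii h2 (@oner_neq0 k)) (W_cat (W_pair hii h2 bx0) (W_refl _))).
have s1 := W_cat base (W_refl l).
have s2 := W_cat (W_refl ([:: 1; x; b; b * x] ++ [:: 1])) (IH (b * x) bx0 l0).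
rewrite -catA /= in s1.
rewrite -catA /= in s2.
apply: W_trans s1 _; apply: W_trans s2 _.
rewrite big_cons !mulr1 !mul1r [b * (x * _)]mulrA.
by apply: W_perm; permt.
Qed.

End Comb.


Section Final.
Variable k : fieldType.
Implicit Types a b : seq k.

Lemma witt_of_diag (q X : qform k) a b :
  isometric q (qdiag a) -> isometric X (qdiag b) -> Wrel a b -> witt_equiv q X.
Proof.
move=> iq iX [r [u i]]; exists r, u.
apply: iso_trans (iso_sum iq (iso_refl (hyp k r))) _.
apply: iso_trans (qsum_diag _ _) _.
apply: iso_trans i _.
apply: iso_trans (iso_sym (qsum_diag _ _)) _.
exact: iso_sum (iso_sym iX) (iso_refl _).
Qed.

Lemma iso_dim (p q : qform k) : isometric p q -> qdim p = qdim q.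
Proof. by case. Qed.

Lemma size_hs r : size (hs k r) = (2 * r)%N.
Proof. by elim: r => //= r IH; rewrite IH; lia. Qed.

Lemma prod_hs r : \prod_(x <- hs k r) x = (-1) ^+ r.
Proof. by elim: r => [|r IH]; rewrite ?big_nil // /hs /= !big_cons -/(hs k r) IH mul1r exprS. Qed.

Lemma qdim_bigsum (l : seq (qform k)) : qdim (qbigsum l) = sumn (map (@qdim k) l).
Proof. by elim: l => //= p l ->. Qed.

Lemma det_bigsum (l : seq (qform k)) :
  \det (gram (qbigsum l)) = \prod_(p <- l) \det (gram p).
Proof.
elim: l => [|p l IH]; first by rewrite big_nil det_mx00.
by rewrite big_cons /= det_ublock IH.
Qed.

Lemma prod_sq (I : Type) (l : seq I) (f : I -> k) :
  (forall i, exists c, f i = c ^+ 2) -> exists c, \prod_(i <- l) f i = c ^+ 2.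
Proof.
move=> hf; elim: l => [|i l [c IH]]; first by exists 1; rewrite big_nil expr1n.
have [d hd] := hf i; exists (d * c); by rewrite big_cons IH hd exprMn.
Qed.

Lemma prod_scal (x : k) (t : seq k) :
  \prod_(y <- t) (x * y) = x ^+ size t * \prod_(y <- t) y.
Proof.
elim: t => [|y t IH]; first by rewrite !big_nil mul1r.
rewrite !big_cons IH /= exprS; ring.
Qed.

Lemma diag_of_qf (h2 : (2%:R : k) != 0) (p : qform k) : is_qf p ->
  exists a, all (fun y => y != 0) a /\ isometric p (qdiag a).
Proof. by case: p => n A [sA uA]; exact: (@diag_ex k h2 n A sA uA). Qed.

Lemma det_tens2 (h2 : (2%:R : k) != 0) (p1 p2 : qform k) : is_qf p1 -> is_qf p2 ->
  ~~ odd (qdim p1) -> ~~ odd (qdim p2) ->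
  exists c, \det (gram (qtens p1 (qtens p2 (qone k)))) = c ^+ 2.
Proof.
move=> q1 q2 e1 e2.
have [a1 [_ i1]] := diag_of_qf h2 q1.
have [a2 [_ i2]] := diag_of_qf h2 q2.
set t := [seq x * y | x <- a2, y <- [:: (1 : k)]].
have full : isometric (qtens p1 (qtens p2 (qone k))) (qdiag [seq x * y | x <- a1, y <- t]).
  apply: iso_trans (iso_tens i1 (iso_tens i2 (iso_refl _))) _.
  apply: iso_trans (iso_tens (iso_refl _) (qtens_diag _ _)) _.
  exact: qtens_diag.
have [c [_ ec]] := det_iso (iso_sym full).
rewrite ec det_qdiag big_allpairs_dep.
under eq_bigr do rewrite prod_scal.
rewrite big_split /=.
have st : size t = qdim p2 by rewrite size_allpairs muln1 (iso_dim i2).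
have sa : size a1 = qdim p1 by rewrite (iso_dim i1).
have [m1 hm1] : exists m, qdim p1 = (2 * m)%N by exists (qdim p1)./2; rewrite -[LHS]odd_double_half (negbTE e1); lia.
have [m2 hm2] : exists m, qdim p2 = (2 * m)%N by exists (qdim p2)./2; rewrite -[LHS]odd_double_half (negbTE e2); lia.
have -> : \prod_(i <- a1) \prod_(y <- t) y = (\prod_(y <- t) y) ^+ size a1.
  by elim: a1 {i1 sa full ec} => [|x a IH]; rewrite ?big_nil ?expr0 // big_cons IH exprS.
rewrite -prodrXl sa st hm1 hm2.
exists (c * (\prod_(i <- a1) i ^+ m2) * (\prod_(y <- t) y ^+ m1)).
rewrite !exprMn -!prodrXl -mulrA; congr (_ * (_ * _)); apply: eq_bigr => i _; by rewrite -exprM mulnC.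
Qed.


Lemma even_sumn (l : seq nat) : all (fun x => ~~ odd x) l -> ~~ odd (sumn l).
Proof. elim: l => //= x l IH /andP [hx hl]; by rewrite oddD (negbTE hx) (negbTE (IH hl)). Qed.

Lemma Ipow_even m (q : qform k) : (0 < m)%N -> in_Ipow m q -> ~~ odd (qdim q).
Proof.
case: m => // m _ [r [F [hF [r' [u i]]]]].
have := iso_dim i; rewrite /= qdim_bigsum !size_hs => e.
have hS : ~~ odd (sumn [seq qdim i | i <- [seq qbigtens [seq F i0 j | j <- enum 'I_m.+1] | i0 <- enum 'I_r]]).
  apply: even_sumn; rewrite -map_comp all_map; apply/allP => j _ /=.
  by rewrite enum_ordSl /= oddM (negbTE (hF j ord0).2).
move: (congr1 odd e); rewrite !oddD /= !addbF !addbb !addbF => ->; exact: hS.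
Qed.

Lemma det_hyp r : \det (gram (hyp k r)) = (-1) ^+ r.
Proof. rewrite -prod_hs; exact: det_qdiag. Qed.

Lemma Ipow2_det (h2 : (2%:R : k) != 0) (ii : k) (hii : ii ^+ 2 = -1) (q : qform k) :
  in_Ipow 2 q -> exists d, \det (gram q) = d ^+ 2.
Proof.
case=> r [F [hF [r' [u i]]]].
have [c [c0 ec]] := det_iso i.
move: ec; rewrite /= !det_ublock !det_hyp det_bigsum big_map.
have [dX ->] : exists d, \prod_(j <- enum 'I_r) \det (gram (qbigtens [seq F j j0 | j0 <- enum 'I_2])) = d ^+ 2.
  apply: prod_sq => j; rewrite !enum_ordSl enum_ord0 /=.
  by apply: det_tens2 => //; [exact: (hF _ _).1 | exact: (hF _ _).1 | exact: (hF _ _).2 | exact: (hF _ _).2].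
have i0 : ii != 0 by apply/eqP => i0; move: hii; rewrite i0 expr0n /= => /eqP; rewrite eq_sym oppr_eq0 oner_eq0.
have hu : forall n, (-1) ^+ n = (ii ^+ n) ^+ 2 by move=> n; rewrite -hii exprAC.
rewrite !hu => e.
have j0 : ii ^+ r' != 0 by rewrite expf_neq0.
exists (dX * ii ^+ u / (c * ii ^+ r')).
move: e j0; set I := ii ^+ u; set J := ii ^+ r' => e j0.
have e' : \det (gram q) = dX ^+ 2 * I ^+ 2 / (c ^+ 2 * J ^+ 2).
  by rewrite e; field; rewrite c0 j0.
by rewrite e'; field; rewrite c0 j0.
Qed.

Lemma diag_head1 (h2 : (2%:R : k) != 0) (q : qform k) : is_qf q -> represents q 1 ->
  exists a, all (fun y => y != 0) a /\ isometric q (qdiag (1 :: a)).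
Proof.
case: q => [[|n] A] [sA uA] [x hx].
  by move: hx; rewrite /qval /= mxE big_ord0 => /eqP; rewrite eq_sym oner_eq0.
have cx : qv A x != 0 by rewrite /qv; move: hx; rewrite /qval /= => ->; exact: oner_neq0.
have [s [s0 iso]] := @diag_head k n (fun D sD uD => @diag_ex k h2 n D sD uD) A x sA uA cx.
by exists s; split => //; move: iso; rewrite /qv; move: hx; rewrite /qval /= => ->.
Qed.

End Final.


Section Comb2.
Variable k : fieldType.

Lemma perm_ones (a : seq k) : perm_eq (flatten [seq [:: 1; x] | x <- a]) (nseq (size a) 1 ++ a).
Proof.
apply/seq.permP => P; elim: a => //= x a IH.
move: IH; rewrite !count_cat /= => IH; lia.
Qed.

Lemma size_pfs (b : k) l : size (pfs b l) = size l.
Proof. by elim: l b => //= x l IH b; rewrite IH. Qed.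

Lemma all_pfs (b : k) l : b != 0 -> all (fun y => y != 0) l ->
  all (fun s => (size s == 2%N) && all (fun x => x != 0) s) (pfs b l).
Proof.
elim: l b => //= x l IH b b0 /andP [x0 l0].
by rewrite b0 x0 /= IH // mulf_neq0.
Qed.

Lemma prod_nz (a : seq k) : all (fun y => y != 0) a -> \prod_(x <- a) x != 0.
Proof.
elim: a => [|x a IH] /=; first by rewrite big_nil oner_neq0.
by case/andP => x0 a0; rewrite big_cons mulf_neq0 // IH.
Qed.

Lemma even_half n : ~~ odd n -> n = (2 * n./2)%N.
Proof. by move=> e; rewrite -[n in LHS]odd_double_half (negbTE e); lia. Qed.

End Comb2.

Unset Implicit Arguments.

Theorem proposition2p1 (k : fieldType)
  (hchar : (2%:R : k) != 0) (hi : exists i : k, i ^+ 2 = -1)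
  (q : qform k) (hq : is_qf q) :
  (in_Ipow 1 q ->
     Pf_le 1 q (qdim q) /\ (represents q 1 -> Pf_le 1 q (qdim q).-1)) /\
  (in_Ipow 2 q ->
     Pf_le 2 q (qdim q - 2) /\ (represents q 1 -> Pf_le 2 q (qdim q - 3))).
Proof.
have [ii hii] := hi.
have h2 := hchar.
have Wone : forall a : seq k, Wrel (flatten (map (@pdiag k) [seq [:: x] | x <- a])) (nseq (size a) 1 ++ a).
  move=> a; rewrite -map_comp (eq_map (@pdiag1 k)); exact/W_perm/perm_ones.
split.
- move=> hI; have ev := Ipow_even (ltn0Sn 0) hI.
  have [a [a0 iqa]] := diag_of_qf h2 hq.
  have sa : size a = qdim q by rewrite (iso_dim iqa).
  have hm := even_half ev; set m := (qdim q)./2 in hm.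
  split.
  + exists [seq [:: x] | x <- a]; split; first by rewrite size_map sa.
    split.
      rewrite all_map; apply/allP => x xa /=; by rewrite (allP a0 x xa).
    apply: witt_of_diag iqa (bigsum_diag _) _.
    apply: W_trans (W_sym (Wone a)).
    rewrite sa hm; exact: W_sym (W_ones hii h2 m a).
  + move=> hr; have [a' [a0' iqa']] := diag_head1 h2 hq hr.
    have sa' : (size a').+1 = qdim q by rewrite (iso_dim iqa').
    exists [seq [:: x] | x <- a']; split; first by rewrite size_map -sa'.
    split.
      rewrite all_map; apply/allP => x xa /=; by rewrite (allP a0' x xa).
    apply: witt_of_diag iqa' (bigsum_diag _) _.
    apply: W_trans (W_sym (Wone a')).
    have -> : size a' = (1 + 2 * m.-1)%N by move: hm sa'; case: (m) => [|m'] /=; lia.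
    rewrite nseqD -catA.
    exact: (W_cat (W_refl [:: 1]) (W_sym (W_ones hii h2 _ a'))).
- move=> hI; have ev := Ipow_even (isT : (0 < 2)%N) hI.
  have [d hd] := Ipow2_det h2 hii hI.
  have hm := even_half ev; set m := (qdim q)./2 in hm.
  have sqprod : forall a, all (fun y => y != 0) a -> isometric q (qdiag a) ->
      exists e, e != 0 /\ \prod_(x <- a) x = e ^+ 2.
    move=> a a0 iqa; have [c [c0 ec]] := det_iso iqa.
    move: ec; rewrite det_qdiag hd -exprMn => ec.
    exists (c * d); split => //.
    by apply: contraNneq (prod_nz a0) => e0; rewrite ec e0 expr0n.
  split.
  + have [a [a0 iqa]] := diag_of_qf h2 hq.
    have sa : size a = qdim q by rewrite (iso_dim iqa).
    have [e [e0 he]] := sqprod a a0 iqa.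
    case: a a0 iqa sa he => [|a1 rest] a0 iqa sa he.
      exists [::]; split => //; split => //.
      exact: witt_of_diag iqa (bigsum_diag [::]) (W_refl _).
    case/lastP: rest a0 iqa sa he => [|l an] a0 iqa sa he.
      by move: hm; rewrite -sa /=; lia.
    move: a0; rewrite /= all_rcons => /and3P [a10 an0 l0].
    exists (pfs a1 l); split; first by rewrite size_pfs -sa /= size_rcons; lia.
    split; first exact: all_pfs.
    apply: witt_of_diag iqa (bigsum_diag _) _.
    have C := claim hii h2 a10 l0.
    have W1 := W_cat C (W_refl [:: an]).
    rewrite -!catA /= cats1 in W1.
    apply: W_trans W1 _.
    have [m' hm'] : exists m', size l = (2 * m')%N.
      exists m.-1; move: hm; rewrite -sa /= size_rcons; lia.
    rewrite hm'; apply: (W_close hii h2 _ m' _ e0).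
      by rewrite mulf_neq0 // prod_nz.
    by rewrite -he big_cons big_rcons /= mulrA.
  + move=> hr; have [a' [a0' iqa]] := diag_head1 h2 hq hr.
    have sa : (size a').+1 = qdim q by rewrite (iso_dim iqa).
    have a1' : all (fun y => y != 0) (1 :: a') by rewrite /= oner_neq0.
    have [e [e0 he]] := sqprod (1 :: a') a1' iqa.
    clear a1'; case: a' a0' iqa sa he => [|x rest] a0 iqa sa he.
      by move: hm; rewrite -sa /=; lia.
    case/lastP: rest a0 iqa sa he => [|l an] a0 iqa sa he.
      exists [::]; split => //; split => //.
      apply: witt_of_diag iqa (bigsum_diag [::]) _.
      apply: (W_close hii h2 [::] 0 (oner_neq0 k) e0).
      by rewrite -he !big_cons big_nil mulr1.
    move: a0; rewrite /= all_rcons => /and3P [x0 an0 l0].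
    exists (pfs x l); split; first by rewrite size_pfs -sa /= size_rcons; lia.
    split; first exact: all_pfs.
    apply: witt_of_diag iqa (bigsum_diag _) _.
    have C := claim hii h2 x0 l0.
    have W1 := W_cat (W_refl [:: 1]) (W_cat C (W_refl [:: an])).
    rewrite /= -!catA /= cats1 in W1.
    apply: W_trans W1 _.
    have [m' hm'] : exists m', (size l).+1 = (2 * m')%N.
      exists m.-1; move: hm; rewrite -sa /= size_rcons; lia.
    have W2 : Wrel (1 :: flatten [seq pdiag i | i <- pfs x l] ++ nseq (size l) 1 ++ [:: x * \prod_(y <- l) y; an])
       (flatten [seq pdiag i | i <- pfs x l] ++ nseq (size l).+1 1 ++ [:: x * \prod_(y <- l) y; an]).
      by apply: W_perm; apply/seq.permP => P; do 6! rewrite ?count_cat /=; lia.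
    apply: W_trans W2 _.
    rewrite hm'; apply: (W_close hii h2 _ m' _ e0).
      by rewrite mulf_neq0 // prod_nz.
    by rewrite -he !big_cons big_rcons /= mul1r mulrA.
Qed.
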